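(* Let $\Xi\to C$ be a sequent without stoups (regarded, in the context of $\mathcal{M}'_{2018}$, as a sequent all of whose stoups are empty). Then the following are equivalent: (1) $\Xi\to C$ is derivable in $\mathcal{F}_{2018}$ without cut; (2) $\Xi\to C$ is derivable in $\mathcal{F}_{2018}$, possibly using cut; (3) $\Xi\to C$ is derivable in $\mathcal{M}'_{2018}$ extended with the stoup cut rule; (4) $\Xi\to C$ is derivable in $\mathcal{M}'_{2018}$ (without cut). The same equivalence holds with $\mathcal{F}^{-}_{2018}$ in place of $\mathcal{F}_{2018}$ and $\mathcal{M}'^{-}_{2018}$ in place of $\mathcal{M}'_{2018}$.
   Context: Formulae are built from a countable set of variables and $\mathbf1$ by $\backslash,/,\cdot,\wedge,\vee$ and the unary $\langle\rangle$, $[]^{-1}$, $!$. Calculi with stoups: a stoup is a finite multiset of formulae ($\varnothing$ empty); a tree term is a formula or $[\Xi]$; a meta-formula is $\zeta;\Gamma$ ($\zeta$ a stoup, $\Gamma$ a finite sequence of tree terms, empty $\Lambda$), $\varnothing;\Gamma$ written $\Gamma$; comma is concatenation / multiset union; sequents $\Xi\to C$; $\Xi(\Theta)$ designates an occurrence of a meta-formula $\Theta$ which is $\Xi$ itself or the content of a bracket $[\Theta]$ at any depth. Rules of $\mathcal{M}'_{2018}$: axioms $A\to A$, $\Lambda\to\mathbf1$; ($/L$) from $\zeta_1;\Gamma\to B$ and $\Xi(\zeta_2;\Delta_1,C,\Delta_2)\to D$ infer $\Xi(\zeta_1,\zeta_2;\Delta_1,C/B,\Gamma,\Delta_2)\to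 D$; ($/R$) from $\zeta;\Gamma,B\to C$ infer $\zeta;\Gamma\to C/B$; ($\backslash L$) from $\zeta_1;\Gamma\to A$ and $\Xi(\zeta_2;\Delta_1,C,\Delta_2)\to D$ infer $\Xi(\zeta_1,\zeta_2;\Delta_1,\Gamma,A\backslash C,\Delta_2)\to D$; ($\backslash R$) from $\zeta;A,\Gamma\to C$ infer $\zeta;\Gamma\to A\backslash C$; ($\cdot L$) from $\Xi(\zeta;\Delta_1,A,B,\Delta_2)\to D$ infer $\Xi(\zeta;\Delta_1,A\cdot B,\Delta_2)\to D$; ($\cdot R$) from $\zeta_1;\Delta\to A$, $\zeta_2;\Gamma\to B$ infer $\zeta_1,\zeta_2;\Delta,\Gamma\to A\cdot B$; ($\mathbf1L$) from $\Xi(\zeta;\Delta_1,\Delta_2)\to A$ infer $\Xi(\zeta;\Delta_1,\mathbf1,\Delta_2)\to A$; ($\vee L$) from $\Xi(\zeta;\Delta_1,A_1,\Delta_2)\to C$ and $\Xi(\zeta;\Delta_1,A_2,\Delta_2)\to C$ infer $\Xi(\zeta;\Delta_1,A_1\vee A_2,\Delta_2)\to C$; ($\vee R_i$) from $\Xi\to A_i$ infer $\Xi\to A_1\vee A_2$; ($\wedge L_i$) from $\Xi(\zeta;\Delta_1,A_i,\Delta_2)\to C$ infer $\Xi(\zeta;\Delta_1,A_1\wedge A_2,\Delta_2)\to C$; ($\wedge R$) from $\Xi\to A_1$ and $\Xi\to A_2$ infer $\Xi\to A_1\wedge A_2$; ($[]^{-1}L$) from $\Xi(\zeta;\Delta_1,A,\Delta_2)\to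 B$ infer $\Xi(\zeta;\Delta_1,[[]^{-1}A],\Delta_2)\to B$; ($[]^{-1}R$) from $[\Xi]\to A$ infer $\Xi\to[]^{-1}A$; ($\langle\rangle L$) from $\Xi(\zeta;\Delta_1,[A],\Delta_2)\to B$ infer $\Xi(\zeta;\Delta_1,\langle\rangle A,\Delta_2)\to B$; ($\langle\rangle R$) from $\Xi\to A$ infer $[\Xi]\to\langle\rangle A$; ($!L$) from $\Xi(\zeta,A;\Gamma_1,\Gamma_2)\to B$ infer $\Xi(\zeta;\Gamma_1,!A,\Gamma_2)\to B$; ($!P$) from $\Xi(\zeta;\Gamma_1,A,\Gamma_2)\to B$ infer $\Xi(\zeta,A;\Gamma_1,\Gamma_2)\to B$; ($!R'$) from $A;\Lambda\to B$ infer $A;\Lambda\to!B$; ($!C'$) from $\Xi(\zeta,A;\Gamma_1,[\zeta',A;\Gamma_2],\Gamma_3)\to B$ infer $\Xi(\zeta,A;\Gamma_1,[[\zeta';\Gamma_2]],\Gamma_3)\to B$. $\mathcal{M}'^{-}_{2018}$ is $\mathcal{M}'_{2018}$ restricted to formulae without $\mathbf1$, without $\Lambda\to\mathbf1$ and $\mathbf1L$, with $\backslash R,/R$ only if $\Gamma\ne\Lambda$ or $\zeta\ne\varnothing$, and $!C'$ only if $\Gamma_2\ne\Lambda$ or $\zeta'\neq\varnothing$. The stoup cut rule is: from $\xi;\Pi\to A$ and $\Xi(\zeta;\Gamma_1,A,\Gamma_2)\to C$ infer $\Xi(\xi,\zeta;\Gamma_1,\Pi,\Gamma_2)\to C$.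 Stoup-free calculi: meta-formulae are finite sequences of tree terms (all stoups empty); rules of $\mathcal{F}_{2018}$ are the stoup-free versions of the rules above other than $!L,!P,!R',!C'$ (drop all stoups), together with ($!L$) from $\Xi(\Delta_1,A,\Delta_2)\to C$ infer $\Xi(\Delta_1,!A,\Delta_2)\to C$; ($!P_1$) from $\Xi(\Delta_1,!A,\Phi,\Delta_2)\to C$ infer $\Xi(\Delta_1,\Phi,!A,\Delta_2)\to C$; ($!P_2$) the converse; ($!R$) from $!A\to B$ infer $!A\to!B$; ($!C$) from $\Xi(!A,\Gamma_1,[!A,\Gamma_2],\Gamma_3)\to C$ infer $\Xi(!A,\Gamma_1,[[\Gamma_2]],\Gamma_3)\to C$; and the cut rule: from $\Pi\to A$ and $\Xi(\Gamma_1,A,\Gamma_2)\to C$ infer $\Xi(\Gamma_1,\Pi,\Gamma_2)\to C$. $\mathcal{F}^{-}_{2018}$ is $\mathcal{F}_{2018}$ restricted to formulae without $\mathbf1$, without $\Lambda\to\mathbf1$ and $\mathbf1L$, with $\backslash R,/R$ only if $\Gamma\neq\Lambda$, and $!C$ only if $\Gamma_2\neq\Lambda$. *)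

(* Defs.v *)
From Stdlib Require Import List Bool Permutation.
Import ListNotations.

Inductive formula : Type :=
| Var   (n : nat)
| One
| Under (A C : formula)
| Over  (C B : formula)
| Prod  (A B : formula)
| Meet  (A B : formula)
| Join  (A B : formula)
| Dia   (A : formula)
| BoxInv (A : formula)
| Bang  (A : formula).

Fixpoint ofree (A : formula) : bool :=
  match A with
  | Var _ => true
  | One => false
  | Under A B | Over A B | Prod A B | Meet A B | Join A B => ofree A && ofree B
  | Dia A | BoxInv A | Bang A => ofree A
  end.

Inductive ftm : Type :=
| FF (A : formula)
| FB (G : list ftm).

Definition fmeta := list ftm.
Definition fseq := (fmeta * formula)%type.

(* Xi(Theta): Theta is Xi itself, or the content of a bracket at any depth *)
Inductive fctx : Type :=
| FHole
| FIn (G1 : list ftm) (c : fctx) (G2 : list ftm).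

Fixpoint fplug (c : fctx) (T : fmeta) : fmeta :=
  match c with
  | FHole => T
  | FIn G1 c' G2 => G1 ++ FB (fplug c' T) :: G2
  end.

Fixpoint ftm_ofree (t : ftm) : bool :=
  match t with
  | FF A => ofree A
  | FB G => forallb ftm_ofree G
  end.

Definition fseq_ofree (s : fseq) : bool := forallb ftm_ofree (fst s) && ofree (snd s).

(* Rules of F_2018 (cut = true adds the cut rule; minus = true gives F^-_2018).
   [frule cut minus ps c] : c follows from premises ps by one rule instance. *)
Inductive frule (cut minus : bool) : list fseq -> fseq -> Prop :=
| f_ax A : frule cut minus [] ([FF A], A)
| f_one : minus = false -> frule cut minus [] ([], One)
| f_overL c G B D1 C D2 D :
    frule cut minus [(G, B); (fplug c (D1 ++ FF C :: D2), D)]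
                    (fplug c (D1 ++ FF (Over C B) :: G ++ D2), D)
| f_overR G B C : (minus = true -> G <> []) ->
    frule cut minus [(G ++ [FF B], C)] (G, Over C B)
| f_underL c G A D1 C D2 D :
    frule cut minus [(G, A); (fplug c (D1 ++ FF C :: D2), D)]
                    (fplug c (D1 ++ G ++ FF (Under A C) :: D2), D)
| f_underR G A C : (minus = true -> G <> []) ->
    frule cut minus [(FF A :: G, C)] (G, Under A C)
| f_prodL c D1 A B D2 D :
    frule cut minus [(fplug c (D1 ++ FF A :: FF B :: D2), D)]
                    (fplug c (D1 ++ FF (Prod A B) :: D2), D)
| f_prodR D A G B :
    frule cut minus [(D, A); (G, B)] (D ++ G, Prod A B)
| f_oneL c D1 D2 A : minus = false ->
    frule cut minus [(fplug c (D1 ++ D2), A)] (fplug c (D1 ++ FF One :: D2), A)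
| f_joinL c D1 A1 A2 D2 C :
    frule cut minus [(fplug c (D1 ++ FF A1 :: D2), C); (fplug c (D1 ++ FF A2 :: D2), C)]
                    (fplug c (D1 ++ FF (Join A1 A2) :: D2), C)
| f_joinR1 X A1 A2 : frule cut minus [(X, A1)] (X, Join A1 A2)
| f_joinR2 X A1 A2 : frule cut minus [(X, A2)] (X, Join A1 A2)
| f_meetL1 c D1 A1 A2 D2 C :
    frule cut minus [(fplug c (D1 ++ FF A1 :: D2), C)] (fplug c (D1 ++ FF (Meet A1 A2) :: D2), C)
| f_meetL2 c D1 A1 A2 D2 C :
    frule cut minus [(fplug c (D1 ++ FF A2 :: D2), C)] (fplug c (D1 ++ FF (Meet A1 A2) :: D2), C)
| f_meetR X A1 A2 : frule cut minus [(X, A1); (X, A2)] (X, Meet A1 A2)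
| f_boxinvL c D1 A D2 B :
    frule cut minus [(fplug c (D1 ++ FF A :: D2), B)]
                    (fplug c (D1 ++ FB [FF (BoxInv A)] :: D2), B)
| f_boxinvR X A : frule cut minus [([FB X], A)] (X, BoxInv A)
| f_diaL c D1 A D2 B :
    frule cut minus [(fplug c (D1 ++ FB [FF A] :: D2), B)]
                    (fplug c (D1 ++ FF (Dia A) :: D2), B)
| f_diaR X A : frule cut minus [(X, A)] ([FB X], Dia A)
| f_bangL c D1 A D2 C :
    frule cut minus [(fplug c (D1 ++ FF A :: D2), C)] (fplug c (D1 ++ FF (Bang A) :: D2), C)
| f_bangP1 c D1 A P D2 C :
    frule cut minus [(fplug c (D1 ++ FF (Bang A) :: P ++ D2), C)]
                    (fplug c (D1 ++ P ++ FF (Bang A) :: D2), C)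
| f_bangP2 c D1 A P D2 C :
    frule cut minus [(fplug c (D1 ++ P ++ FF (Bang A) :: D2), C)]
                    (fplug c (D1 ++ FF (Bang A) :: P ++ D2), C)
| f_bangR A B : frule cut minus [([FF (Bang A)], B)] ([FF (Bang A)], Bang B)
| f_bangC c A G1 G2 G3 C : (minus = true -> G2 <> []) ->
    frule cut minus [(fplug c (FF (Bang A) :: G1 ++ FB (FF (Bang A) :: G2) :: G3), C)]
                    (fplug c (FF (Bang A) :: G1 ++ FB [FB G2] :: G3), C)
| f_cut P A c G1 G2 C : cut = true ->
    frule cut minus [(P, A); (fplug c (G1 ++ FF A :: G2), C)] (fplug c (G1 ++ P ++ G2), C).

Inductive fder (cut minus : bool) : fseq -> Prop :=
| fder_rule ps s :
    frule cut minus ps s ->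
    (forall p, In p ps -> fder cut minus p) ->
    (minus = true -> fseq_ofree s = true) ->
    fder cut minus s.

(* A stoup (finite multiset of formulae) is represented
   by a list; multiset identity is recovered by the rule m_perm below,
   which lets any stoup, at any depth, be replaced by a permutation of it. *)
Definition stoup := list formula.

Inductive tm : Type :=
| TF (A : formula)
| TB (z : stoup) (G : list tm).

Definition meta := (stoup * list tm)%type.
Definition mseq := (meta * formula)%type.

Inductive ctx : Type :=
| Hole
| In_ (z : stoup) (G1 : list tm) (c : ctx) (G2 : list tm).

Fixpoint plug (c : ctx) (T : meta) : meta :=
  match c with
  | Hole => T
  | In_ z G1 c' G2 => let (z', G') := plug c' T in (z, G1 ++ TB z' G' :: G2)
  end.

Fixpoint tm_ofree (t : tm) : bool :=
  match t with
  | TF A => ofree A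
  | TB z G => forallb ofree z && forallb tm_ofree G
  end.

Definition mseq_ofree (s : mseq) : bool :=
  forallb ofree (fst (fst s)) && forallb tm_ofree (snd (fst s)) && ofree (snd s).

Inductive mrule (cut minus : bool) : list mseq -> mseq -> Prop :=
| m_ax A : mrule cut minus [] (([], [TF A]), A)
| m_one : minus = false -> mrule cut minus [] (([], []), One)
| m_overL c z1 G B z2 D1 C D2 D :
    mrule cut minus [((z1, G), B); (plug c (z2, D1 ++ TF C :: D2), D)]
                    (plug c (z1 ++ z2, D1 ++ TF (Over C B) :: G ++ D2), D)
| m_overR z G B C : (minus = true -> G <> [] \/ z <> []) ->
    mrule cut minus [((z, G ++ [TF B]), C)] ((z, G), Over C B)
| m_underL c z1 G A z2 D1 C D2 D :
    mrule cut minus [((z1, G), A); (plug c (z2, D1 ++ TF C :: D2), D)]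
                    (plug c (z1 ++ z2, D1 ++ G ++ TF (Under A C) :: D2), D)
| m_underR z G A C : (minus = true -> G <> [] \/ z <> []) ->
    mrule cut minus [((z, TF A :: G), C)] ((z, G), Under A C)
| m_prodL c z D1 A B D2 D :
    mrule cut minus [(plug c (z, D1 ++ TF A :: TF B :: D2), D)]
                    (plug c (z, D1 ++ TF (Prod A B) :: D2), D)
| m_prodR z1 D A z2 G B :
    mrule cut minus [((z1, D), A); ((z2, G), B)] ((z1 ++ z2, D ++ G), Prod A B)
| m_oneL c z D1 D2 A : minus = false ->
    mrule cut minus [(plug c (z, D1 ++ D2), A)] (plug c (z, D1 ++ TF One :: D2), A)
| m_joinL c z D1 A1 A2 D2 C :
    mrule cut minus [(plug c (z, D1 ++ TF A1 :: D2), C); (plug c (z, D1 ++ TF A2 :: D2), C)]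
                    (plug c (z, D1 ++ TF (Join A1 A2) :: D2), C)
| m_joinR1 X A1 A2 : mrule cut minus [(X, A1)] (X, Join A1 A2)
| m_joinR2 X A1 A2 : mrule cut minus [(X, A2)] (X, Join A1 A2)
| m_meetL1 c z D1 A1 A2 D2 C :
    mrule cut minus [(plug c (z, D1 ++ TF A1 :: D2), C)]
                    (plug c (z, D1 ++ TF (Meet A1 A2) :: D2), C)
| m_meetL2 c z D1 A1 A2 D2 C :
    mrule cut minus [(plug c (z, D1 ++ TF A2 :: D2), C)]
                    (plug c (z, D1 ++ TF (Meet A1 A2) :: D2), C)
| m_meetR X A1 A2 : mrule cut minus [(X, A1); (X, A2)] (X, Meet A1 A2)
| m_boxinvL c z D1 A D2 B :
    mrule cut minus [(plug c (z, D1 ++ TF A :: D2), B)]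
                    (plug c (z, D1 ++ TB [] [TF (BoxInv A)] :: D2), B)
| m_boxinvR z G A : mrule cut minus [(([], [TB z G]), A)] ((z, G), BoxInv A)
| m_diaL c z D1 A D2 B :
    mrule cut minus [(plug c (z, D1 ++ TB [] [TF A] :: D2), B)]
                    (plug c (z, D1 ++ TF (Dia A) :: D2), B)
| m_diaR z G A : mrule cut minus [((z, G), A)] (([], [TB z G]), Dia A)
| m_bangL c z A G1 G2 B :
    mrule cut minus [(plug c (z ++ [A], G1 ++ G2), B)]
                    (plug c (z, G1 ++ TF (Bang A) :: G2), B)
| m_bangP c z A G1 G2 B :
    mrule cut minus [(plug c (z, G1 ++ TF A :: G2), B)]
                    (plug c (z ++ [A], G1 ++ G2), B)
| m_bangR A B : mrule cut minus [(([A], []), B)] (([A], []), Bang B)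
| m_bangC c z A G1 z' G2 G3 B : (minus = true -> G2 <> [] \/ z' <> []) ->
    mrule cut minus [(plug c (z ++ [A], G1 ++ TB (z' ++ [A]) G2 :: G3), B)]
                    (plug c (z ++ [A], G1 ++ TB [] [TB z' G2] :: G3), B)
| m_cut x P A c z G1 G2 C : cut = true ->
    mrule cut minus [((x, P), A); (plug c (z, G1 ++ TF A :: G2), C)]
                    (plug c (x ++ z, G1 ++ P ++ G2), C)
| m_perm c z z' G C : Permutation z z' ->
    mrule cut minus [(plug c (z, G), C)] (plug c (z', G), C).

Inductive mder (cut minus : bool) : mseq -> Prop :=
| mder_rule ps s :
    mrule cut minus ps s ->
    (forall p, In p ps -> mder cut minus p) ->
    (minus = true -> mseq_ofree s = true) ->
    mder cut minus s.

Fixpoint emb (t : ftm) : tm :=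
  match t with
  | FF A => TF A
  | FB G => TB [] (map emb G)
  end.

Definition emb_seq (s : fseq) : mseq := (([], map emb (fst s)), snd s).

(* Main.v *)
Require Import Defs.
From Stdlib Require Import List Bool Permutation Lia Btauto.
Import ListNotations.


Definition lofree (L : list ftm) : bool := forallb ftm_ofree L.

Fixpoint cofree (c : fctx) : bool :=
  match c with FHole => true | FIn G1 c G2 => lofree G1 && cofree c && lofree G2 end.

Lemma lofree_app L1 L2 : lofree (L1 ++ L2) = lofree L1 && lofree L2.
Proof. apply forallb_app. Qed.

Lemma lofree_cons t L : lofree (t :: L) = ftm_ofree t && lofree L.
Proof. reflexivity. Qed.

Lemma lofree_plug c X : lofree (fplug c X) = cofree c && lofree X.
Proof.
  induction c; simpl; [reflexivity|].
  rewrite lofree_app, lofree_cons. simpl. fold (lofree (fplug c X)). rewrite IHc.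
  destruct (lofree G1), (cofree c), (lofree X), (lofree G2); reflexivity.
Qed.

Lemma lofree_FB G : ftm_ofree (FB G) = lofree G.
Proof. reflexivity. Qed.

Ltac bsimpl := repeat (rewrite ?lofree_app, ?lofree_cons, ?lofree_plug, ?lofree_FB in *; simpl ftm_ofree in *; simpl ofree in *).
Ltac bdecomp := repeat match goal with
  | H : _ && _ = true |- _ => apply andb_true_iff in H; destruct H
  | |- _ && _ = true => apply andb_true_iff; split
  end.
Ltac bauto := bsimpl; bdecomp; try assumption; try reflexivity.

Fixpoint ccomp (c d : fctx) : fctx :=
  match c with FHole => d | FIn G1 c' G2 => FIn G1 (ccomp c' d) G2 end.

Lemma plug_ccomp c d X : fplug (ccomp c d) X = fplug c (fplug d X).
Proof. induction c; simpl; congruence. Qed.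

Lemma plug_comp K E1 E2 c : exists K' E1' E2', forall X,
  fplug K (E1 ++ fplug c X ++ E2) = fplug K' (E1' ++ X ++ E2').
Proof.
  destruct c as [|H1 c3 H2].
  - exists K, E1, E2. reflexivity.
  - exists (ccomp K (FIn (E1 ++ H1) c3 (H2 ++ E2))), [], []. intros X.
    rewrite plug_ccomp. simpl. rewrite app_nil_r, <- !app_assoc. reflexivity.
Qed.

Inductive r1 (A : formula) (P : list ftm) : list ftm -> list ftm -> Prop :=
| r1_here L : r1 A P (FF A :: L) (P ++ L)
| r1_skip t L L' : r1 A P L L' -> r1 A P (t :: L) (t :: L')
| r1_in G G' L : r1 A P G G' -> r1 A P (FB G :: L) (FB G' :: L).

Section R1.
Variables (A : formula) (P : list ftm).
Notation r := (r1 A P).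

Lemma r1_nil L' : ~ r [] L'.
Proof. intro H; inversion H. Qed.

Lemma r1_app_l L1 L1' L2 : r L1 L1' -> r (L1 ++ L2) (L1' ++ L2).
Proof. induction 1; simpl; try rewrite <- app_assoc; constructor; auto. Qed.

Lemma r1_app_r L1 L2 L2' : r L2 L2' -> r (L1 ++ L2) (L1 ++ L2').
Proof. induction L1; simpl; auto. intro; constructor; auto. Qed.

Lemma r1_app_inv L1 L2 L' : r (L1 ++ L2) L' ->
  (exists L1', r L1 L1' /\ L' = L1' ++ L2) \/ (exists L2', r L2 L2' /\ L' = L1 ++ L2').
Proof.
  revert L'; induction L1 as [|t L1 IH]; intros L' H; simpl in *.
  - right; eauto.
  - inversion H; subst.
    + left. exists (P ++ L1). split; [constructor|]. rewrite app_assoc; reflexivity.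
    + match goal with H1 : r (L1 ++ L2) _ |- _ => destruct (IH _ H1) as [[L1' [? ?]]|[L2' [? ?]]] end; subst.
      * left. exists (t :: L1'); split; [constructor; auto|reflexivity].
      * right. exists L2'; split; auto.
    + left. exists (FB G' :: L1); split; [constructor; auto|reflexivity].
Qed.

Lemma r1_cons_inv t L L' : r (t :: L) L' ->
  (t = FF A /\ L' = P ++ L) \/ (exists L'', r L L'' /\ L' = t :: L'')
  \/ (exists G G', t = FB G /\ r G G' /\ L' = FB G' :: L).
Proof. intro H; inversion H; subst; eauto 10. Qed.

Lemma r1_plug c Y Y' : r Y Y' -> r (fplug c Y) (fplug c Y').
Proof. induction c; simpl; auto. intro. apply r1_app_r. constructor 3. auto. Qed.

Lemma r1_plug_inv c Y L' : r (fplug c Y) L' ->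
  (exists Y', r Y Y' /\ L' = fplug c Y') \/
  (exists c', L' = fplug c' Y /\ forall Z, r (fplug c Z) (fplug c' Z)).
Proof.
  revert L'; induction c as [|G1 c IH G2]; intros L' H; simpl in *.
  - left; eauto.
  - apply r1_app_inv in H as [[G1' [H1 ->]]|[L2 [H1 ->]]].
    + right. exists (FIn G1' c G2). split; [reflexivity|]. intro Z. simpl. apply r1_app_l; auto.
    + apply r1_cons_inv in H1 as [[H2 _]|[[L'' [H2 ->]]|[G [G' [H2 [H3 ->]]]]]]; [discriminate| |].
      * right. exists (FIn G1 c L''). split; [reflexivity|]. intro Z. simpl. apply r1_app_r. constructor; auto.
      * injection H2 as <-. apply IH in H3 as [[Y' [H4 ->]]|[c' [-> H4]]].
        -- left. exists Y'. split; auto.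
        -- right. exists (FIn G1 c' G2). split; [reflexivity|]. intro Z; simpl. apply r1_app_r. constructor 3. auto.
Qed.

Lemma r1_lev_inv c D1 X D2 L' : r (fplug c (D1 ++ X ++ D2)) L' ->
  (exists c', L' = fplug c' (D1 ++ X ++ D2) /\ forall Z, r (fplug c Z) (fplug c' Z)) \/
  (exists D1', r D1 D1' /\ L' = fplug c (D1' ++ X ++ D2)) \/
  (exists D2', r D2 D2' /\ L' = fplug c (D1 ++ X ++ D2')) \/
  (exists X', r X X' /\ L' = fplug c (D1 ++ X' ++ D2)).
Proof.
  intro H. apply r1_plug_inv in H as [[Y' [H ->]]|[c' [-> H]]]; [|left; eauto].
  apply r1_app_inv in H as [[D1' [H ->]]|[Y2 [H ->]]]; [right; left; eauto|].
  apply r1_app_inv in H as [[X' [H ->]]|[D2' [H ->]]]; right; right; [right|left]; eauto.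
Qed.

Lemma r1_inv L L' : r L L' -> exists K E1 E2,
  L = fplug K (E1 ++ FF A :: E2) /\ L' = fplug K (E1 ++ P ++ E2).
Proof.
  induction 1.
  - exists FHole, [], L. split; reflexivity.
  - destruct IHr1 as [K [E1 [E2 [-> ->]]]]. destruct K as [|G1 K G2].
    + exists FHole, (t :: E1), E2. split; reflexivity.
    + exists (FIn (t :: G1) K G2), E1, E2. split; reflexivity.
  - destruct IHr1 as [K [E1 [E2 [-> ->]]]].
    exists (FIn [] K L), E1, E2. split; reflexivity.
Qed.

Lemma r1_mk c E1 E2 : r (fplug c (E1 ++ FF A :: E2)) (fplug c (E1 ++ P ++ E2)).
Proof. apply r1_plug, r1_app_r. constructor. Qed.

Lemma r1_ofree L L' : r L L' -> lofree L = true -> lofree P = true -> lofree L' = true.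
Proof. induction 1; intros; bauto; auto. Qed.

End R1.

Lemma r1_id A L L' : r1 A [FF A] L L' -> L' = L.
Proof. induction 1; simpl; congruence. Qed.

Inductive rb (A0 : formula) (Q : formula -> Prop) : list ftm -> list ftm -> Prop :=
| rb_nil : rb A0 Q [] []
| rb_keep t L L' : rb A0 Q L L' -> rb A0 Q (FF t :: L) (FF t :: L')
| rb_rep B L L' : Q B -> rb A0 Q L L' -> rb A0 Q (FF (Bang A0) :: L) (FF (Bang B) :: L')
| rb_br G G' L L' : rb A0 Q G G' -> rb A0 Q L L' -> rb A0 Q (FB G :: L) (FB G' :: L').

Section RB.
Variables (A0 : formula) (Q : formula -> Prop).
Notation r := (rb A0 Q).


Fixpoint rb_refl_t (t : ftm) : forall L, r L L -> r (t :: L) (t :: L).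
Proof.
  destruct t as [B|G]; intros L H.
  - constructor; auto.
  - constructor; auto. induction G as [|t' G IHG]; [constructor|]. apply rb_refl_t; auto.
Defined.

Lemma rb_refl L : r L L.
Proof. induction L; [constructor|]. apply rb_refl_t; auto. Qed.

Lemma rb_app L1 L1' L2 L2' : r L1 L1' -> r L2 L2' -> r (L1 ++ L2) (L1' ++ L2').
Proof. induction 1; intros; simpl; try constructor; auto. Qed.

Lemma rb_app_inv L1 L2 L' : r (L1 ++ L2) L' ->
  exists L1' L2', L' = L1' ++ L2' /\ r L1 L1' /\ r L2 L2'.
Proof.
  revert L'; induction L1 as [|t L1 IH]; intros L' H; simpl in *.
  - exists [], L'. repeat split; auto. constructor.
  - inversion H; subst;
    match goal with H : r (L1 ++ L2) _ |- _ => destruct (IH _ H) as [X [Y [-> [? ?]]]] end.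
    + exists (FF t0 :: X), Y. repeat split; auto. constructor; auto.
    + exists (FF (Bang B) :: X), Y. repeat split; auto. constructor; auto.
    + exists (FB G' :: X), Y. repeat split; auto. constructor; auto.
Qed.

Lemma rb_nil_inv L' : r [] L' -> L' = [].
Proof. intro H; inversion H; auto. Qed.

Lemma rb_FF_inv t L L' : r (FF t :: L) L' -> exists L'', r L L'' /\
  (L' = FF t :: L'' \/ exists B, t = Bang A0 /\ Q B /\ L' = FF (Bang B) :: L'').
Proof. intro H; inversion H; subst; eauto 10. Qed.

Lemma rb_FB_inv G L L' : r (FB G :: L) L' -> exists G' L'', L' = FB G' :: L'' /\ r G G' /\ r L L''.
Proof. intro H; inversion H; subst; eauto 10. Qed.

Lemma rb_plug_inv c Y L' : r (fplug c Y) L' -> exists c' Y', L' = fplug c' Y' /\ r Y Y' /\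
  forall Z Z', r Z Z' -> r (fplug c Z) (fplug c' Z').
Proof.
  revert L'; induction c as [|G1 c IH G2]; intros L' H; simpl in *.
  - exists FHole, L'. repeat split; auto.
  - apply rb_app_inv in H as [G1' [L2 [-> [H1 H2]]]].
    apply rb_FB_inv in H2 as [G' [G2' [-> [H3 H4]]]].
    apply IH in H3 as [c' [Y' [-> [H5 H6]]]].
    exists (FIn G1' c' G2'), Y'. repeat split; auto.
    intros Z Z' HZ. simpl. apply rb_app; auto. constructor; auto.
Qed.

Lemma rb_plug c c' Y Y' : (forall Z Z', r Z Z' -> r (fplug c Z) (fplug c' Z')) -> r Y Y' ->
  r (fplug c Y) (fplug c' Y').
Proof. auto. Qed.

Lemma rb_ofree L L' : (forall B, Q B -> ofree B = true) -> r L L' -> lofree L = true -> lofree L' = true.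
Proof. intros HQ; induction 1; intros; bauto; auto. Qed.

End RB.


Fixpoint fsize (A : formula) : nat :=
  match A with
  | Var _ | One => 1
  | Under A B | Over A B | Prod A B | Meet A B | Join A B => S (fsize A + fsize B)
  | Dia A | BoxInv A | Bang A => S (fsize A)
  end.

Section CE.
Variable minus : bool.
Notation fd := (fder false minus).

Lemma fd_ofree L C : fd (L, C) -> minus = true -> lofree L = true /\ ofree C = true.
Proof.
  intros H Hm. inversion H as [ps s Hr Hps Hof Hs]. specialize (Hof Hm). subst s.
  unfold fseq_ofree in Hof. simpl in Hof. apply andb_true_iff in Hof. exact Hof.
Qed.

Lemma fd_mk ps L C : frule false minus ps (L, C) -> (forall p, In p ps -> fd p) ->
  (minus = true -> lofree L = true /\ ofree C = true) -> fd (L, C).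
Proof.
  intros Hr Hp Ho. econstructor; eauto. intro Hm. destruct (Ho Hm). unfold fseq_ofree; simpl.
  apply andb_true_iff; auto.
Qed.

Lemma fd_mk0 L C : frule false minus [] (L, C) ->
  (minus = true -> lofree L = true /\ ofree C = true) -> fd (L, C).
Proof. intros; eapply fd_mk; eauto. intros p []. Qed.

Lemma fd_mk1 p L C : frule false minus [p] (L, C) -> fd p ->
  (minus = true -> lofree L = true /\ ofree C = true) -> fd (L, C).
Proof. intros; eapply fd_mk; eauto. intros q [<-|[]]; auto. Qed.

Lemma fd_mk2 p1 p2 L C : frule false minus [p1; p2] (L, C) -> fd p1 -> fd p2 ->
  (minus = true -> lofree L = true /\ ofree C = true) -> fd (L, C).
Proof. intros; eapply fd_mk; eauto. intros q [<-|[<-|[]]]; auto. Qed.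

Lemma fd_conv L L' C : fd (L, C) -> L = L' -> fd (L', C).
Proof. intros H ->; auto. Qed.

Definition CutA (A : formula) := forall P L C L',
  fd (P, A) -> fd (L, C) -> r1 A P L L' -> fd (L', C).


End CE.

Lemma rb_nonempty A0 Q L L' : rb A0 Q L L' -> L <> [] -> L' <> [].
Proof. intros H; destruct H; congruence. Qed.

Ltac rbinv := repeat match goal with
 | H : rb _ _ (fplug _ _) _ |- _ =>
     let c' := fresh "c'" in let Y := fresh "Y" in let Hm := fresh "Hm" in let H2 := fresh "Hr" in
     apply rb_plug_inv in H as [c' [Y [-> [H2 Hm]]]]
 | H : rb _ _ (FF _ :: _) _ |- _ =>
     let L := fresh "L" in let H2 := fresh "Hr" in let H3 := fresh "Heq" in let HQ := fresh "HQ" in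
     let B := fresh "B" in
     apply rb_FF_inv in H as [L [H2 [-> | [B [H3 [HQ ->]]]]]];
     [| try discriminate H3; try (injection H3 as H3; subst)]
 | H : rb _ _ (FB _ :: _) _ |- _ =>
     let G := fresh "G'" in let L := fresh "L" in let H2 := fresh "Hr" in let H3 := fresh "Hr" in
     apply rb_FB_inv in H as [G [L [-> [H2 H3]]]]
 | H : rb _ _ [] _ |- _ => apply rb_nil_inv in H; subst
 | H : rb _ _ (?l ++ _) _ |- _ => is_var l;
     let L1 := fresh "L" in let L2 := fresh "L" in let H2 := fresh "Hr" in let H3 := fresh "Hr" in
     apply rb_app_inv in H as [L1 [L2 [-> [H2 H3]]]]
 end.

Ltac splitIH IH :=
  let H1 := fresh "P1" in let H2 := fresh "P2" in
  try (pose proof (IH _ (or_introl eq_refl)) as H1; simpl in H1);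
  try (pose proof (IH _ (or_intror (or_introl eq_refl))) as H2; simpl in H2).

Ltac rbprove := repeat first [ assumption | apply rb_app | apply rb_keep | apply rb_br | apply rb_nil | (apply rb_rep; [assumption|])
   | match goal with Hm : forall Z Z', rb _ _ Z Z' -> rb _ _ (fplug ?c Z) (fplug ?c' Z') |- rb _ _ (fplug ?c _) (fplug ?c' _) => apply Hm end ].

Ltac useP := match goal with P : forall L', rb _ _ _ L' -> fder _ _ _ |- _ => apply P; solve [rbprove] end.
Ltac sidec := try (let Hm := fresh in intro Hm; eapply rb_nonempty; [eassumption|]; auto).
Ltac gen := first [ eapply fd_mk0; [econstructor; eauto; sidec | auto]
  | eapply fd_mk1; [econstructor; eauto; sidec | useP | auto]
  | eapply fd_mk2; [econstructor; eauto; sidec | useP | useP | auto] ].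



Section CE1.
Variable minus : bool.
Notation fd := (fder false minus).
Section BS.
Variable A0 : formula.
Hypothesis IH0 : CutA minus A0.
Definition QB B := fd ([FF (Bang B)], A0).

Lemma QB_ofree B : minus = true -> QB B -> ofree B = true.
Proof. intros Hm H. apply fd_ofree in H as [H _]; auto. bauto. Qed.

Lemma bang_subst : forall s, fd s -> forall L', rb A0 QB (fst s) L' -> fd (L', snd s).
Proof.
  intros s H. induction H as [ps s Hr Hps IH Hof]. intros L' HL.
  assert (Hof' : minus = true -> lofree L' = true /\ ofree (snd s) = true).
  { intro Hm. specialize (Hof Hm). destruct s as [L C]. unfold fseq_ofree in Hof; simpl in *. bdecomp.
    split; auto. eapply rb_ofree; eauto. intros; apply QB_ofree; auto. }
  clear Hof. destruct Hr; splitIH IH; clear IH Hps; simpl in *; rbinv.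
  all: try gen.
  - eapply fd_mk1; [apply f_bangR | exact HQ | auto].
  - apply (IH0 [FF (Bang B)] (fplug c' (L ++ FF A0 :: L1))); [exact HQ| apply P1; rbprove | apply r1_mk].
Qed.
End BS.
End CE1.


Fixpoint nbt (t : ftm) : bool :=
  match t with FF _ => true | FB G => match G with [] => false | _ => true end && forallb nbt G end.
Definition nb (L : list ftm) := forallb nbt L.
Fixpoint nbc (c : fctx) : bool :=
  match c with FHole => true | FIn G1 c G2 => nb G1 && nbc c && nb G2 end.

Lemma nb_app L1 L2 : nb (L1 ++ L2) = nb L1 && nb L2.
Proof. apply forallb_app. Qed.
Lemma nb_cons t L : nb (t :: L) = nbt t && nb L.
Proof. reflexivity. Qed.

Lemma r1_nonempty A P L L' : r1 A P L L' -> P <> [] -> L' <> [].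
Proof. destruct 1; try discriminate. destruct P; [congruence|discriminate]. Qed.

Lemma plug_nonempty c Y : Y <> [] -> fplug c Y <> [].
Proof. destruct c; simpl; auto. destruct G1; simpl; discriminate. Qed.

Lemma nb_plug c Y : Y <> [] -> nb (fplug c Y) = nbc c && nb Y.
Proof.
  intro HY. induction c; simpl; auto.
  rewrite nb_app, nb_cons. simpl. fold (nb (fplug c Y)). rewrite IHc.
  destruct (fplug c Y) eqn:E; [exfalso; eapply plug_nonempty; eauto|].
  destruct (nb G1), (nbc c), (nb Y), (nb G2); reflexivity.
Qed.

Ltac nonnil := let E := fresh in intro E; repeat (let E1 := fresh in apply app_eq_nil in E; destruct E as [E1 E]); discriminate.

Ltac r1inv := repeat match goal with
 | H : r1 _ _ (fplug _ _) _ |- _ => apply r1_plug_inv in H as [[?Y [?Hr ->]]|[?c' [-> ?Hm]]]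
 | H : r1 _ _ (FF _ :: _) _ |- _ =>
     let Heq := fresh "Heq" in
     apply r1_cons_inv in H as [[Heq ->]|[[?L [?Hr ->]]|[?G [?G' [Heq [?Hr ->]]]]]];
     [injection Heq as Heq; try subst | | discriminate Heq]
 | H : r1 _ _ (FB _ :: _) _ |- _ =>
     let Heq := fresh "Heq" in
     apply r1_cons_inv in H as [[Heq ->]|[[?L [?Hr ->]]|[?G [?G' [Heq [?Hr ->]]]]]];
     [discriminate Heq | | injection Heq as Heq; subst]
 | H : r1 _ _ [] _ |- _ => apply r1_nil in H; contradiction
 | H : r1 _ _ (?l ++ _) _ |- _ => is_var l; apply r1_app_inv in H as [[?L [?Hr ->]]|[?L [?Hr ->]]]
 end.

Ltac r1prove := first [ assumption
 | apply r1_skip; r1prove | apply r1_in; r1prove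
 | apply r1_app_l; r1prove | apply r1_app_r; r1prove
 | match goal with Hm : forall Z, r1 _ _ (fplug ?c Z) (fplug ?c' Z) |- r1 _ _ (fplug ?c _) (fplug ?c' _) => apply Hm end
 | apply r1_plug; r1prove ].

Ltac useP1 := match goal with P : forall L', r1 _ _ _ L' -> fder _ _ _ |- _ => apply P; solve [r1prove] end.
Ltac usePr := match goal with P : fder _ _ _ |- _ => exact P end.
Ltac sidec1 := try (let Hm := fresh in intro Hm; eapply r1_nonempty; [eassumption|]; auto).
Ltac gen1 := first [ eapply fd_mk0; [econstructor; eauto; sidec1 | auto]
  | eapply fd_mk1; [econstructor; eauto; sidec1 | first [useP1 | usePr] | auto]
  | eapply fd_mk2; [econstructor; eauto; sidec1 | first [useP1 | usePr] | first [useP1 | usePr] | auto] ].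

Section CE2.
Variable minus : bool.
Notation fd := (fder false minus).

Ltac nbsimpl := repeat (rewrite ?nb_app, ?nb_cons in *; simpl nbt in *).

Lemma fd_nb s : fd s -> minus = true -> fst s <> [] /\ nb (fst s) = true.
Proof.
  intro H. induction H as [ps s Hr Hps IH Hof]. intros Hm.
  destruct Hr; try discriminate; splitIH IH; clear IH Hps; simpl in *;
  repeat match goal with H : _ -> _ /\ _ |- _ => specialize (H Hm); destruct H end.
  all: try congruence.
  all: repeat match goal with H : context [nb (fplug _ _)] |- _ => rewrite nb_plug in H; [|nonnil] end.
  all: split; [try (apply plug_nonempty; nonnil); try nonnil; try assumption|].
  all: try (rewrite nb_plug; [|nonnil]).
  all: nbsimpl; bdecomp; auto.
  all: try (let E := fresh in intro E; apply app_eq_nil in E; destruct E; congruence).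
  all: try match goal with |- ?l <> [] => destruct l; [discriminate|discriminate] end.
  all: try match goal with |- match ?l with _ => _ end = true => destruct l; [exfalso; intuition | reflexivity] end.
Qed.

Definition princ (A : formula) (P : list ftm) : Prop :=
  match A with
  | Over C B => fd (P ++ [FF B], C)
  | Under A1 C => fd (FF A1 :: P, C)
  | Prod A1 B1 => exists P1 P2, P = P1 ++ P2 /\ fd (P1, A1) /\ fd (P2, B1)
  | Meet A1 A2 => fd (P, A1) /\ fd (P, A2)
  | Join A1 A2 => fd (P, A1) \/ fd (P, A2)
  | Dia A1 => exists X, P = [FB X] /\ fd (X, A1)
  | BoxInv A1 => fd ([FB P], A1)
  | One => P = []
  | Var _ => False
  | Bang _ => False
  end.

Lemma cutA_use A P c E1 E2 C : CutA minus A -> fd (P, A) -> fd (fplug c (E1 ++ FF A :: E2), C) ->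
  fd (fplug c (E1 ++ P ++ E2), C).
Proof. intros H H1 H2. eapply H; eauto. apply r1_mk. Qed.

Lemma cut_right A P (IHA : forall A', fsize A' < fsize A -> CutA minus A')
  (HPf : fd (P, A)) (HPr : princ A P) :
  forall s, fd s -> forall L', r1 A P (fst s) L' -> fd (L', snd s).
Proof.
  intros s H. induction H as [ps s Hr Hps IH Hof]. intros L' HL.
  assert (HPne : minus = true -> P <> []) by (intro Hm; apply (fd_nb _ HPf Hm)).
  assert (Hof' : minus = true -> lofree L' = true /\ ofree (snd s) = true).
  { intro Hm. specialize (Hof Hm). destruct s as [L C]. unfold fseq_ofree in Hof; simpl in *. bdecomp.
    split; auto. eapply r1_ofree; eauto. apply (fd_ofree _ _ _ HPf Hm). }
  clear Hof. destruct Hr; splitIH IH; splitIH Hps; clear IH Hps; simpl in *; r1inv.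
  all: try gen1.
  all: simpl princ in HPr; try contradiction.
  - rewrite app_nil_r; exact HPf.
  - eapply fd_conv; [apply (cutA_use C (P ++ G) c D1 D2); [apply IHA; simpl; lia| |eassumption] | rewrite <- !app_assoc; reflexivity].
    eapply fd_conv; [apply (cutA_use B G FHole P []); [apply IHA; simpl; lia|eassumption|exact HPr] | simpl; rewrite app_nil_r; reflexivity].
  - lazymatch type of HPr with fder _ _ (FF ?a :: _, ?cc) =>
    eapply fd_conv; [apply (cutA_use cc (G ++ P) c D1 D2); [apply IHA; simpl; lia| |eassumption] | rewrite <- !app_assoc; reflexivity];
    apply (cutA_use a G FHole [] P); [apply IHA; simpl; lia|eassumption|exact HPr] end.
  - destruct HPr as [Q1 [Q2 [-> [HA HB]]]].
    lazymatch type of HA with fder _ _ (_, ?a) => lazymatch type of HB with fder _ _ (_, ?b) =>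
    eapply fd_conv; [apply (cutA_use b Q2 c (D1 ++ Q1) D2); [apply IHA; simpl; lia| exact HB |] | rewrite <- !app_assoc; reflexivity];
    eapply fd_conv; [apply (cutA_use a Q1 c D1 (FF b :: D2)); [apply IHA; simpl; lia| exact HA | eassumption] | rewrite <- !app_assoc; reflexivity] end end.
  - subst P. assumption.
  - destruct HPr as [HA|HA]; lazymatch type of HA with fder _ _ (_, ?a) =>
      apply (cutA_use a P c D1 D2); [apply IHA; simpl; lia| exact HA | eassumption] end.
  - destruct HPr as [HA _]. lazymatch type of HA with fder _ _ (_, ?a) =>
      apply (cutA_use a P c D1 D2); [apply IHA; simpl; lia| exact HA | eassumption] end.
  - destruct HPr as [_ HA]. lazymatch type of HA with fder _ _ (_, ?a) =>
      apply (cutA_use a P c D1 D2); [apply IHA; simpl; lia| exact HA | eassumption] end.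
  - rewrite app_nil_r. lazymatch type of HPr with fder _ _ (_, ?a) =>
    apply (cutA_use a [FB P] c D1 D2); [apply IHA; simpl; lia| exact HPr | eassumption] end.
  - destruct HPr as [X [-> HA]]. lazymatch type of HA with fder _ _ (_, ?a) =>
    eapply fd_conv; [apply (cutA_use a X (ccomp c (FIn D1 FHole D2)) [] []); [apply IHA; simpl; lia| exact HA |] | rewrite plug_ccomp; simpl; rewrite app_nil_r; reflexivity];
    rewrite plug_ccomp; assumption end.
Qed.
End CE2.


Lemma rb_cons A0 Q t L L' : rb A0 Q L L' -> rb A0 Q (t :: L) (t :: L').
Proof. intro H. destruct t; constructor; auto. apply rb_refl. Qed.

Lemma r1_rb A0 B (Q : formula -> Prop) L L' : r1 (Bang A0) [FF (Bang B)] L L' -> Q B -> rb A0 Q L L'.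
Proof.
  induction 1; intro HQ; simpl.
  - constructor; auto. apply rb_refl.
  - apply rb_cons; auto.
  - constructor; auto. apply rb_refl.
Qed.

Section CE3.
Variable minus : bool.
Notation fd := (fder false minus).

Lemma ext_gen1 Xp Xc C :
  (forall K D1 D2, fd (fplug K (D1 ++ Xp ++ D2), C) ->
     (minus = true -> lofree (fplug K (D1 ++ Xc ++ D2)) = true /\ ofree C = true) ->
     fd (fplug K (D1 ++ Xc ++ D2), C)) ->
  forall K E1 E2 c D1 D2, fd (fplug K (E1 ++ fplug c (D1 ++ Xp ++ D2) ++ E2), C) ->
     (minus = true -> lofree (fplug K (E1 ++ fplug c (D1 ++ Xc ++ D2) ++ E2)) = true /\ ofree C = true) ->
     fd (fplug K (E1 ++ fplug c (D1 ++ Xc ++ D2) ++ E2), C).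
Proof.
  intros H K E1 E2 c D1 D2 H1 H2. destruct (plug_comp K E1 E2 c) as [K' [E1' [E2' Heq]]].
  rewrite Heq in *. rewrite !app_assoc in *. rewrite <- (app_assoc (E1' ++ D1)) in *.
  rewrite <- !(app_assoc _ _ E2') in *. apply H; auto.
Qed.

Lemma ext_gen2 Xp1 Xp2 Xc C :
  (forall K D1 D2, fd (fplug K (D1 ++ Xp1 ++ D2), C) -> fd (fplug K (D1 ++ Xp2 ++ D2), C) ->
     (minus = true -> lofree (fplug K (D1 ++ Xc ++ D2)) = true /\ ofree C = true) ->
     fd (fplug K (D1 ++ Xc ++ D2), C)) ->
  forall K E1 E2 c D1 D2, fd (fplug K (E1 ++ fplug c (D1 ++ Xp1 ++ D2) ++ E2), C) ->
     fd (fplug K (E1 ++ fplug c (D1 ++ Xp2 ++ D2) ++ E2), C) ->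
     (minus = true -> lofree (fplug K (E1 ++ fplug c (D1 ++ Xc ++ D2) ++ E2)) = true /\ ofree C = true) ->
     fd (fplug K (E1 ++ fplug c (D1 ++ Xc ++ D2) ++ E2), C).
Proof.
  intros H K E1 E2 c D1 D2 H1 H1' H2. destruct (plug_comp K E1 E2 c) as [K' [E1' [E2' Heq]]].
  rewrite Heq in *. rewrite !app_assoc in *. rewrite <- (app_assoc (E1' ++ D1)) in *.
  rewrite <- !(app_assoc _ _ E2') in *. apply H; auto.
Qed.


Lemma bangC_gen K E A G1 G2 G3 C :
  fd (fplug K (E ++ FF (Bang A) :: G1 ++ FB (FF (Bang A) :: G2) :: G3), C) ->
  (minus = true -> G2 <> []) ->
  (minus = true -> lofree (fplug K (E ++ FF (Bang A) :: G1 ++ FB [FB G2] :: G3)) = true /\ ofree C = true) ->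
  fd (fplug K (E ++ FF (Bang A) :: G1 ++ FB [FB G2] :: G3), C).
Proof.
  intros H Hn Ho.
  assert (H1 : fd (fplug K ([] ++ FF (Bang A) :: E ++ G1 ++ FB (FF (Bang A) :: G2) :: G3), C)).
  { eapply fd_mk1; [apply f_bangP2 | exact H |].
    intro Hm. apply fd_ofree in H as [H H']; auto. split; auto. bauto. }
  assert (H2 : fd (fplug K (FF (Bang A) :: (E ++ G1) ++ FB [FB G2] :: G3), C)).
  { eapply fd_mk1; [apply f_bangC; auto | rewrite <- app_assoc; exact H1 |].
    intro Hm. destruct (Ho Hm) as [H3 H4]. split; auto. bauto. }
  eapply fd_mk1; [apply (f_bangP1 _ _ K [] A E) | rewrite <- app_assoc in H2; exact H2 | exact Ho].
Qed.

Ltac mainIH HL := match goal with P : _ = _ -> forall L C L', _ -> r1 _ _ L L' -> _ |- _ =>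
   eapply P; [reflexivity | exact HL | simpl; rewrite <- ?app_assoc; simpl; apply r1_mk] end.

Ltac lcase Hr1 HL Hof' cc Xc D1 D2 :=
  destruct (r1_inv _ _ _ _ Hr1) as [K [E1 [E2 [-> ->]]]];
  match goal with |- fder _ _ (?T, _) =>
    let Heq := fresh in
    assert (Heq : T = fplug K (E1 ++ fplug cc (D1 ++ Xc ++ D2) ++ E2)) by (simpl; rewrite <- ?app_assoc; simpl; reflexivity);
    rewrite Heq in Hof' |- *; clear Heq end.
Ltac lcase1 Hr1 HL Hof' cc Xp Xc D1 D2 inner :=
  lcase Hr1 HL Hof' cc Xc D1 D2;
  apply (ext_gen1 Xp Xc); [intros ? ? ? ? ?; simpl in *; rewrite <- ?app_assoc in *; simpl in *; inner | mainIH HL | exact Hof'].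
Ltac lcase2 Hr1 HL Hof' cc Xp1 Xp2 Xc D1 D2 inner :=
  lcase Hr1 HL Hof' cc Xc D1 D2;
  apply (ext_gen2 Xp1 Xp2 Xc); [intros ? ? ? ? ? ?; simpl in *; rewrite <- ?app_assoc in *; simpl in *; inner | mainIH HL | mainIH HL | exact Hof'].

Lemma cutA_all Acut (IHA : forall A', fsize A' < fsize Acut -> CutA minus A') : CutA minus Acut.
Proof.
  intros P L C L' HP. revert L C L'.
  assert (G : forall s, fd s -> snd s = Acut -> forall L C L', fd (L, C) -> r1 Acut (fst s) L L' -> fd (L', C)).
  2: exact (G _ HP eq_refl).
  intros s H. induction H as [ps s Hr Hps IH Hof]. intros Es L C L' HL Hr1.
  assert (Hs : fd s) by (econstructor; eauto).
  assert (Hof' : minus = true -> lofree L' = true /\ ofree C = true).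
  { intro Hm. destruct (fd_ofree _ _ _ HL Hm). split; auto. eapply r1_ofree; eauto.
    specialize (Hof Hm). unfold fseq_ofree in Hof. bdecomp. auto. }
  clear Hof.
  destruct Hr as [A|e|c G B D1 C0 D2 D|G B C0 n|c G A D1 C0 D2 D|G A C0 n|c D1 A B D2 D|D A G B
    |c D1 D2 A e|c D1 A1 A2 D2 C0|X A1 A2|X A1 A2|c D1 A1 A2 D2 C0|c D1 A1 A2 D2 C0|X A1 A2
    |c D1 A D2 B|X A|c D1 A D2 B|X A|c D1 A D2 C0|c D1 A P0 D2 C0|c D1 A P0 D2 C0|A B|c A G1 G2 G3 C0 n|];
  simpl in Es; subst Acut; splitIH IH; splitIH Hps; clear IH Hps; simpl fst in *; simpl snd in *.
  - rewrite (r1_id _ _ _ Hr1). exact HL.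
  - solve [refine (cut_right minus _ _ IHA Hs _ (L, C) HL L' Hr1); simpl; eauto 6].
  - lcase1 Hr1 HL Hof' c [FF C0] (FF (Over C0 B) :: G) D1 D2 ltac:(eapply fd_mk2; [apply f_overL | assumption | assumption | assumption]).
  - solve [refine (cut_right minus _ _ IHA Hs _ (L, C) HL L' Hr1); simpl; eauto 6].
  - lcase1 Hr1 HL Hof' c [FF C0] (G ++ [FF (Under A C0)]) D1 D2 ltac:(eapply fd_mk2; [apply f_underL | assumption | assumption | assumption]).
  - solve [refine (cut_right minus _ _ IHA Hs _ (L, C) HL L' Hr1); simpl; eauto 6].
  - lcase1 Hr1 HL Hof' c [FF A; FF B] [FF (Prod A B)] D1 D2 ltac:(eapply fd_mk1; [apply f_prodL | assumption | assumption]).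
  - solve [refine (cut_right minus _ _ IHA Hs _ (L, C) HL L' Hr1); simpl; eauto 6].
  - lcase1 Hr1 HL Hof' c (@nil ftm) [FF One] D1 D2 ltac:(eapply fd_mk1; [apply f_oneL; assumption | assumption | assumption]).
  - lcase2 Hr1 HL Hof' c [FF A1] [FF A2] [FF (Join A1 A2)] D1 D2 ltac:(eapply fd_mk2; [apply f_joinL | assumption | assumption | assumption]).
  - solve [refine (cut_right minus _ _ IHA Hs _ (L, C) HL L' Hr1); simpl; eauto 6].
  - solve [refine (cut_right minus _ _ IHA Hs _ (L, C) HL L' Hr1); simpl; eauto 6].
  - lcase1 Hr1 HL Hof' c [FF A1] [FF (Meet A1 A2)] D1 D2 ltac:(eapply fd_mk1; [apply f_meetL1 | assumption | assumption]).
  - lcase1 Hr1 HL Hof' c [FF A2] [FF (Meet A1 A2)] D1 D2 ltac:(eapply fd_mk1; [apply f_meetL2 | assumption | assumption]).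
  - solve [refine (cut_right minus _ _ IHA Hs _ (L, C) HL L' Hr1); simpl; eauto 6].
  - lcase1 Hr1 HL Hof' c [FF A] [FB [FF (BoxInv A)]] D1 D2 ltac:(eapply fd_mk1; [apply f_boxinvL | assumption | assumption]).
  - solve [refine (cut_right minus _ _ IHA Hs _ (L, C) HL L' Hr1); simpl; eauto 6].
  - lcase1 Hr1 HL Hof' c [FB [FF A]] [FF (Dia A)] D1 D2 ltac:(eapply fd_mk1; [apply f_diaL | assumption | assumption]).
  - solve [refine (cut_right minus _ _ IHA Hs _ (L, C) HL L' Hr1); simpl; eauto 6].
  - lcase1 Hr1 HL Hof' c [FF A] [FF (Bang A)] D1 D2 ltac:(eapply fd_mk1; [apply f_bangL | assumption | assumption]).
  - lcase1 Hr1 HL Hof' c (FF (Bang A) :: P0) (P0 ++ [FF (Bang A)]) D1 D2 ltac:(eapply fd_mk1; [apply f_bangP1 | assumption | assumption]).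
  - lcase1 Hr1 HL Hof' c (P0 ++ [FF (Bang A)]) (FF (Bang A) :: P0) D1 D2 ltac:(eapply fd_mk1; [apply f_bangP2 | assumption | assumption]).
  - apply (bang_subst minus B (IHA B ltac:(simpl; lia)) (L, C) HL L').
    eapply r1_rb; [exact Hr1 | assumption].
  - lcase1 Hr1 HL Hof' c (FF (Bang A) :: G1 ++ [FB (FF (Bang A) :: G2)]) (FF (Bang A) :: G1 ++ [FB [FB G2]]) (@nil ftm) G3
      ltac:(apply bangC_gen; assumption).
  - discriminate.
Qed.
End CE3.

Lemma cut_all minus A : CutA minus A.
Proof.
  assert (H : forall n A, fsize A < n -> CutA minus A).
  { induction n; intros A0 HA; [lia|]. apply cutA_all. intros A' HA'. apply IHn. lia. }
  apply (H (S (fsize A))). lia.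
Qed.

Lemma frule_nocut minus ps s : frule true minus ps s ->
  frule false minus ps s \/
  exists P A c G1 G2 C, ps = [(P, A); (fplug c (G1 ++ FF A :: G2), C)] /\ s = (fplug c (G1 ++ P ++ G2), C).
Proof. destruct 1; try (left; constructor; assumption); right; eauto 10. Qed.

Theorem cut_elim minus s : fder true minus s -> fder false minus s.
Proof.
  induction 1 as [ps s Hr Hps IH Hof].
  destruct (frule_nocut _ _ _ Hr) as [Hr'|[P [A [c [G1 [G2 [C [-> ->]]]]]]]].
  - econstructor; eauto.
  - eapply (cut_all minus A P); [apply IH; simpl; auto | apply IH; simpl; auto | apply r1_mk].
Qed.

Lemma nocut_cut minus s : fder false minus s -> fder true minus s.
Proof.
  induction 1 as [ps s Hr Hps IH Hof]. econstructor; eauto.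
  destruct Hr; try (constructor; assumption). discriminate.
Qed.


Definition bangs (z : stoup) : list ftm := map (fun A => FF (Bang A)) z.

Fixpoint trt (t : tm) : ftm :=
  match t with TF A => FF A | TB z G => FB (bangs z ++ map trt G) end.
Definition trm (T : meta) : list ftm := bangs (fst T) ++ map trt (snd T).
Fixpoint trc (c : ctx) : fctx :=
  match c with Hole => FHole | In_ z G1 c G2 => FIn (bangs z ++ map trt G1) (trc c) (map trt G2) end.

Lemma trm_plug c T : trm (plug c T) = fplug (trc c) (trm T).
Proof.
  induction c as [|z G1 c IH G2]; simpl; auto.
  destruct (plug c T) as [z' G'] eqn:E. unfold trm in *; simpl in *.
  rewrite map_app. simpl. rewrite <- app_assoc. rewrite <- IH. reflexivity.
Qed.

Lemma bangs_app z1 z2 : bangs (z1 ++ z2) = bangs z1 ++ bangs z2.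
Proof. apply map_app. Qed.

Lemma lofree_bangs z : lofree (bangs z) = forallb ofree z.
Proof. induction z; simpl; auto. unfold lofree in *; simpl. rewrite IHz. reflexivity. Qed.

Fixpoint trt_ofree (t : tm) : ftm_ofree (trt t) = tm_ofree t.
Proof.
  destruct t as [A|z G]; simpl; auto.
  fold (lofree (bangs z ++ map trt G)). rewrite lofree_app, lofree_bangs. f_equal.
  induction G as [|t G IHG]; simpl; auto. unfold lofree in *; simpl. rewrite trt_ofree, IHG. reflexivity.
Qed.

Lemma lofree_map_trt G : lofree (map trt G) = forallb tm_ofree G.
Proof. induction G; simpl; auto. unfold lofree in *; simpl. rewrite trt_ofree, IHG. reflexivity. Qed.

Lemma lofree_trm T : lofree (trm T) = forallb ofree (fst T) && forallb tm_ofree (snd T).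
Proof. unfold trm. rewrite lofree_app, lofree_bangs, lofree_map_trt. reflexivity. Qed.

Section K.
Variables (k minus : bool).
Notation fk := (fder k minus).

Lemma fk_ofree L C : fk (L, C) -> minus = true -> lofree L = true /\ ofree C = true.
Proof.
  intros H Hm. inversion H as [ps s Hr Hps Hof Hs]. specialize (Hof Hm). subst s.
  unfold fseq_ofree in Hof. simpl in Hof. apply andb_true_iff in Hof. exact Hof.
Qed.

Lemma fk_mk ps L C : frule k minus ps (L, C) -> (forall p, In p ps -> fk p) ->
  (minus = true -> lofree L = true /\ ofree C = true) -> fk (L, C).
Proof.
  intros Hr Hp Ho. econstructor; eauto. intro Hm. destruct (Ho Hm). unfold fseq_ofree; simpl.
  apply andb_true_iff; auto.
Qed.
Lemma fk_mk0 L C : frule k minus [] (L, C) ->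
  (minus = true -> lofree L = true /\ ofree C = true) -> fk (L, C).
Proof. intros; eapply fk_mk; eauto. intros p []. Qed.
Lemma fk_mk1 p L C : frule k minus [p] (L, C) -> fk p ->
  (minus = true -> lofree L = true /\ ofree C = true) -> fk (L, C).
Proof. intros; eapply fk_mk; eauto. intros q [<-|[]]; auto. Qed.
Lemma fk_mk2 p1 p2 L C : frule k minus [p1; p2] (L, C) -> fk p1 -> fk p2 ->
  (minus = true -> lofree L = true /\ ofree C = true) -> fk (L, C).
Proof. intros; eapply fk_mk; eauto. intros q [<-|[<-|[]]]; auto. Qed.

Lemma fk_conv L L' C : fk (L, C) -> L = L' -> fk (L', C).
Proof. intros H ->; auto. Qed.

Ltac ofr H := let Hm := fresh in intro Hm; destruct (fk_ofree _ _ H Hm); split; auto; bauto.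

Lemma mvL c E1 P z E2 C : fk (fplug c (E1 ++ P ++ bangs z ++ E2), C) -> fk (fplug c (E1 ++ bangs z ++ P ++ E2), C).
Proof.
  revert E1; induction z as [|a z IH]; intros E1 H; simpl in *; auto.
  assert (H1 : fk (fplug c (E1 ++ FF (Bang a) :: P ++ bangs z ++ E2), C)).
  { eapply fk_mk1; [apply f_bangP2 | exact H | ofr H]. }
  specialize (IH (E1 ++ [FF (Bang a)])). rewrite <- !app_assoc in IH. apply IH, H1.
Qed.

Lemma mvR c E1 P z E2 C : fk (fplug c (E1 ++ bangs z ++ P ++ E2), C) -> fk (fplug c (E1 ++ P ++ bangs z ++ E2), C).
Proof.
  revert E1; induction z as [|a z IH]; intros E1 H; simpl in *; auto.
  specialize (IH (E1 ++ [FF (Bang a)])). rewrite <- !app_assoc in IH. simpl in IH.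
  apply IH in H.
  eapply fk_mk1; [apply f_bangP1 | exact H | ofr H].
Qed.

Lemma permB c z z' E1 E2 C : Permutation z z' -> fk (fplug c (E1 ++ bangs z ++ E2), C) ->
  fk (fplug c (E1 ++ bangs z' ++ E2), C).
Proof.
  intro Hp. revert E1. induction Hp; intros E1 H; simpl in *; auto.
  - specialize (IHHp (E1 ++ [FF (Bang x)])). rewrite <- !app_assoc in IHHp. apply IHHp, H.
  - eapply fk_mk1; [apply (f_bangP2 _ _ c E1 x [FF (Bang y)]) | exact H | ofr H].
Qed.

Lemma bangC_genk K E A G1 G2 G3 C :
  fk (fplug K (E ++ FF (Bang A) :: G1 ++ FB (FF (Bang A) :: G2) :: G3), C) ->
  (minus = true -> G2 <> []) ->
  fk (fplug K (E ++ FF (Bang A) :: G1 ++ FB [FB G2] :: G3), C).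
Proof.
  intros H Hn.
  assert (H1 : fk (fplug K ([] ++ FF (Bang A) :: E ++ G1 ++ FB (FF (Bang A) :: G2) :: G3), C)).
  { eapply fk_mk1; [apply f_bangP2 | exact H | ofr H]. }
  assert (H2 : fk (fplug K (FF (Bang A) :: (E ++ G1) ++ FB [FB G2] :: G3), C)).
  { eapply fk_mk1; [apply f_bangC; auto | rewrite <- app_assoc; exact H1 | ofr H1]. }
  rewrite <- app_assoc in H2.
  eapply fk_mk1; [apply (f_bangP1 _ _ K [] A E) | exact H2 | ofr H2].
Qed.

End K.

Lemma mseq_ofree_tr T C : mseq_ofree (T, C) = lofree (trm T) && ofree C.
Proof. unfold mseq_ofree. rewrite lofree_trm. reflexivity. Qed.

Lemma bangs_ne G z : G <> [] \/ z <> [] -> bangs z ++ map trt G <> [].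
Proof. intros [H|H] E; apply app_eq_nil in E as [E1 E2]; [destruct G|destruct z]; try discriminate; congruence. Qed.

Section TR.
Variables (k minus : bool).
Notation fk := (fder k minus).

Ltac trsimpl := simpl fst in *; simpl snd in *; rewrite ?trm_plug in *; unfold trm in *; simpl fst in *; simpl snd in *;
  repeat (simpl in *; rewrite ?map_app, ?bangs_app, <- ?app_assoc in *); simpl in *.
Ltac leq := simpl; rewrite <- ?app_assoc; simpl; rewrite <- ?app_assoc; reflexivity.
Ltac ex H := eapply fk_conv; [exact H | leq].
Ltac ofr2 := match goal with Hof' : minus = true -> _ /\ _ |- _ =>
  let Hm := fresh in intro Hm; destruct (Hof' Hm); split; auto; bauto end.
Ltac side := match goal with H : minus = true -> _ \/ _ |- _ =>
  let Hm := fresh in intro Hm; apply bangs_ne; auto end.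

Lemma m_to_f s : mder k minus s -> fk (trm (fst s), snd s).
Proof.
  induction 1 as [ps s Hr Hps IH Hof].
  assert (Hof' : minus = true -> lofree (trm (fst s)) = true /\ ofree (snd s) = true).
  { intro Hm. specialize (Hof Hm). destruct s as [T C]. rewrite mseq_ofree_tr in Hof. bdecomp. auto. }
  clear Hof. destruct Hr; splitIH IH; clear IH Hps; trsimpl.
  - eapply fk_mk0; [apply f_ax | ofr2].
  - eapply fk_mk0; [apply f_one; auto | ofr2].
  - eapply fk_conv; [apply (mvL k minus (trc c) [] (bangs z2 ++ map trt D1 ++ [FF (Over C B)]) z1 (map trt G ++ map trt D2)) | leq].
    eapply fk_conv; [eapply fk_mk2; [apply (f_overL k minus (trc c) (bangs z1 ++ map trt G) B (bangs z2 ++ map trt D1) C (map trt D2) D) | ex P1 | ex P2 | ofr2] | leq].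
  - eapply fk_mk1; [apply (f_overR k minus (bangs z ++ map trt G) B C); side | ex P1 | ofr2].
  - eapply fk_conv; [apply (mvL k minus (trc c) [] (bangs z2 ++ map trt D1) z1 (map trt G ++ FF (Under A C) :: map trt D2)) | leq].
    eapply fk_conv; [eapply fk_mk2; [apply (f_underL k minus (trc c) (bangs z1 ++ map trt G) A (bangs z2 ++ map trt D1) C (map trt D2) D) | ex P1 | ex P2 | ofr2] | leq].
  - eapply fk_mk1; [apply (f_underR k minus (bangs z ++ map trt G) A C); side | | ofr2].
    eapply fk_conv; [apply (mvR k minus FHole [] [FF A] z (map trt G) C); ex P1 | leq].
  - eapply fk_conv; [eapply fk_mk1; [apply (f_prodL k minus (trc c) (bangs z ++ map trt D1) A B (map trt D2) D) | ex P1 | ofr2] | leq].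
  - eapply fk_conv; [apply (mvL k minus FHole (bangs z1) (map trt D) z2 (map trt G)) | leq].
    eapply fk_conv; [eapply fk_mk2; [apply (f_prodR k minus (bangs z1 ++ map trt D) A (bangs z2 ++ map trt G) B) | ex P1 | ex P2 | ofr2] | leq].
  - eapply fk_conv; [eapply fk_mk1; [apply (f_oneL k minus (trc c) (bangs z ++ map trt D1) (map trt D2) A); auto | ex P1 | ofr2] | leq].
  - eapply fk_conv; [eapply fk_mk2; [apply (f_joinL k minus (trc c) (bangs z ++ map trt D1) A1 A2 (map trt D2) C) | ex P1 | ex P2 | ofr2] | leq].
  - eapply fk_mk1; [apply f_joinR1 | ex P1 | ofr2].
  - eapply fk_mk1; [apply f_joinR2 | ex P1 | ofr2].
  - eapply fk_conv; [eapply fk_mk1; [apply (f_meetL1 k minus (trc c) (bangs z ++ map trt D1) A1 A2 (map trt D2) C) | ex P1 | ofr2] | leq].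
  - eapply fk_conv; [eapply fk_mk1; [apply (f_meetL2 k minus (trc c) (bangs z ++ map trt D1) A1 A2 (map trt D2) C) | ex P1 | ofr2] | leq].
  - eapply fk_mk2; [apply f_meetR | ex P1 | ex P2 | ofr2].
  - eapply fk_conv; [eapply fk_mk1; [apply (f_boxinvL k minus (trc c) (bangs z ++ map trt D1) A (map trt D2) B) | ex P1 | ofr2] | leq].
  - eapply fk_mk1; [apply (f_boxinvR k minus (bangs z ++ map trt G) A) | ex P1 | ofr2].
  - eapply fk_conv; [eapply fk_mk1; [apply (f_diaL k minus (trc c) (bangs z ++ map trt D1) A (map trt D2) B) | ex P1 | ofr2] | leq].
  - eapply fk_mk1; [apply (f_diaR k minus (bangs z ++ map trt G) A) | ex P1 | ofr2].
  - eapply fk_conv; [eapply fk_mk1; [apply (f_bangP1 k minus (trc c) (bangs z) A (map trt G1) (map trt G2) B) | ex P1 | ofr2] | leq].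
  - assert (H1 : fk (fplug (trc c) (bangs z ++ map trt G1 ++ FF (Bang A) :: map trt G2), B)).
    { eapply fk_conv; [eapply fk_mk1; [apply (f_bangL k minus (trc c) (bangs z ++ map trt G1) A (map trt G2) B) | ex P1 |] | leq].
      intro Hm. destruct (fk_ofree _ _ _ _ P1 Hm). split; auto. bauto. }
    eapply fk_conv; [eapply fk_mk1; [apply (f_bangP2 k minus (trc c) (bangs z) A (map trt G1) (map trt G2) B) | ex H1 | ofr2] | leq].
  - eapply fk_mk1; [apply f_bangR | ex P1 | ofr2].
  - set (tc := ccomp (trc c) (FIn (bangs z ++ FF (Bang A) :: map trt G1) FHole (map trt G3))).
    assert (H0 : fk (fplug tc ([] ++ bangs z' ++ bangs [A] ++ map trt G2), B)).
    { eapply fk_conv; [exact P1|]. unfold tc. rewrite plug_ccomp. leq. }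
    apply (mvL k minus tc [] (bangs z') [A] (map trt G2) B) in H0.
    assert (H1 : fk (fplug (trc c) (bangs z ++ FF (Bang A) :: map trt G1 ++ FB (FF (Bang A) :: bangs z' ++ map trt G2) :: map trt G3), B)).
    { eapply fk_conv; [exact H0|]. unfold tc. rewrite plug_ccomp. leq. }
    apply (bangC_genk k minus (trc c) (bangs z) A (map trt G1) (bangs z' ++ map trt G2) (map trt G3) B) in H1; [|side].
    ex H1.
  - eapply fk_conv; [apply (mvL k minus (trc c) [] (bangs z ++ map trt G1) x (map trt P ++ map trt G2)) | leq].
    eapply fk_conv; [eapply fk_mk2; [apply (f_cut k minus (bangs x ++ map trt P) A (trc c) (bangs z ++ map trt G1) (map trt G2) C); auto | ex P1 | ex P2 | ofr2] | leq].
  - eapply fk_conv; [apply (permB k minus (trc c) z z' [] (map trt G)); [auto | ex P1] | leq].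
Qed.
End TR.


Inductive spl : list ftm -> stoup -> list tm -> Prop :=
| sp_nil : spl [] [] []
| sp_keep A L z G : spl L z G -> spl (FF A :: L) z (TF A :: G)
| sp_st A L z G : spl L z G -> spl (FF (Bang A) :: L) (A :: z) G
| sp_br G0 z0 G0' L z G : spl G0 z0 G0' -> spl L z G -> spl (FB G0 :: L) z (TB z0 G0' :: G).

Definition mof (T : meta) : bool := forallb ofree (fst T) && forallb tm_ofree (snd T).
Fixpoint cmof (c : ctx) : bool :=
  match c with Hole => true | In_ z G1 c G2 => forallb ofree z && forallb tm_ofree G1 && cmof c && forallb tm_ofree G2 end.

Lemma mof_plug c T : mof (plug c T) = cmof c && mof T.
Proof.
  induction c as [|z G1 c IH G2]; simpl; auto.
  destruct (plug c T) as [z' G'] eqn:E. unfold mof in *; simpl in *.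
  rewrite forallb_app. simpl. rewrite IH.
  destruct (forallb ofree z), (forallb tm_ofree G1), (cmof c), (forallb ofree (fst T)), (forallb tm_ofree (snd T)), (forallb tm_ofree G2); reflexivity.
Qed.

Lemma mof_pair z G : mof (z, G) = forallb ofree z && forallb tm_ofree G.
Proof. reflexivity. Qed.

Lemma forallb_perm {T} (f : T -> bool) l l' : Permutation l l' -> forallb f l = forallb f l'.
Proof.
  induction 1; simpl; auto; try congruence.
  destruct (f x), (f y); reflexivity.
Qed.

Fixpoint mccomp (c d : ctx) : ctx :=
  match c with Hole => d | In_ z G1 c' G2 => In_ z G1 (mccomp c' d) G2 end.
Lemma plug_mccomp c d T : plug (mccomp c d) T = plug c (plug d T).
Proof. induction c; simpl; auto. rewrite IHc. reflexivity. Qed.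

Definition splm (L : list ftm) (T : meta) := spl L (fst T) (snd T).

Lemma spl_app L1 L2 z1 z2 G1 G2 : spl L1 z1 G1 -> spl L2 z2 G2 -> spl (L1 ++ L2) (z1 ++ z2) (G1 ++ G2).
Proof. induction 1; intros; simpl; try constructor; auto. Qed.

Lemma spl_app_inv L1 L2 z G : spl (L1 ++ L2) z G ->
  exists z1 z2 G1 G2, z = z1 ++ z2 /\ G = G1 ++ G2 /\ spl L1 z1 G1 /\ spl L2 z2 G2.
Proof.
  revert z G; induction L1 as [|t L1 IH]; intros z G H; simpl in *.
  - exists [], z, [], G. repeat split; auto. constructor.
  - inversion H; subst;
    match goal with H : spl (L1 ++ L2) _ _ |- _ => destruct (IH _ _ H) as [y1 [y2 [K1 [K2 [-> [-> [? ?]]]]]]] end.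
    + exists y1, y2, (TF A :: K1), K2. repeat split; auto. constructor; auto.
    + exists (A :: y1), y2, K1, K2. repeat split; auto. constructor; auto.
    + exists y1, y2, (TB z0 G0' :: K1), K2. repeat split; auto. constructor; auto.
Qed.

Lemma spl_nil_inv z G : spl [] z G -> z = [] /\ G = [].
Proof. intro H; inversion H; auto. Qed.

Lemma spl_FF_inv A L z G : spl (FF A :: L) z G -> exists z' G', spl L z' G' /\
  ((z = z' /\ G = TF A :: G') \/ (exists A0, A = Bang A0 /\ z = A0 :: z' /\ G = G')).
Proof. intro H; inversion H; subst; eauto 10. Qed.

Lemma spl_FB_inv G0 L z G : spl (FB G0 :: L) z G -> exists z0 G0' G',
  spl G0 z0 G0' /\ spl L z G' /\ G = TB z0 G0' :: G'.
Proof. intro H; inversion H; subst; eauto 10. Qed.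

Lemma spl_ofree L z G : spl L z G -> lofree L = forallb ofree z && forallb tm_ofree G.
Proof.
  induction 1; unfold lofree in *; simpl; rewrite ?IHspl, ?IHspl1, ?IHspl2; auto; btauto.
Qed.

Lemma spl_plug_inv c X z G : spl (fplug c X) z G -> exists c' zx X',
  plug c' (zx, X') = (z, G) /\ spl X zx X' /\ cmof c' = cofree c /\
  forall Y zy Y', spl Y zy Y' -> splm (fplug c Y) (plug c' (zy, Y')).
Proof.
  revert z G; induction c as [|G1 c IH G2]; intros z G H; simpl in *.
  - exists Hole, z, G. repeat split; auto.
  - apply spl_app_inv in H as [z1 [z2 [H1 [H2 [-> [-> [Ha Hb]]]]]]].
    apply spl_FB_inv in Hb as [z0 [G0' [G' [Hc [Hd ->]]]]].
    apply IH in Hc as [c' [zx [X' [He [Hf [Hg Hh]]]]]].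
    exists (In_ (z1 ++ z2) (H1) c' G'), zx, X'. simpl. rewrite He. repeat split; auto.
    + rewrite Hg, forallb_app, (spl_ofree _ _ _ Ha), (spl_ofree _ _ _ Hd). btauto.
    + intros Y zy Y' HY. specialize (Hh _ _ _ HY). unfold splm in *. simpl.
      destruct (plug c' (zy, Y')) as [zz GG]. simpl in *.
      apply spl_app; auto. constructor; auto.
Qed.

Ltac mbsimpl := repeat (rewrite ?mof_plug, ?mof_pair, ?forallb_app in *; simpl forallb in *; simpl tm_ofree in *; simpl ofree in *).
Ltac mbauto := mbsimpl; bdecomp; try assumption; try reflexivity.

Lemma spl_app_nil L1 L2 z G1 G2 : spl L1 z G1 -> spl L2 [] G2 -> spl (L1 ++ L2) z (G1 ++ G2).
Proof. intros H1 H2. rewrite <- (app_nil_r z). apply spl_app; auto. Qed.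

Lemma spl_ne L z G : spl L z G -> L <> [] -> G <> [] \/ z <> [].
Proof. destruct 1; intro Hne; try congruence; [left|right|left]; discriminate. Qed.

Section M.
Variables (k minus : bool).
Notation mk := (mder k minus).

Lemma mk_ofree T C : mk (T, C) -> minus = true -> mof T = true /\ ofree C = true.
Proof.
  intros H Hm. inversion H as [ps s Hr Hps Hof Hs]. specialize (Hof Hm). subst s.
  unfold mseq_ofree in Hof. simpl in Hof. apply andb_true_iff in Hof. exact Hof.
Qed.

Lemma mk_mk ps T C : mrule k minus ps (T, C) -> (forall p, In p ps -> mk p) ->
  (minus = true -> mof T = true /\ ofree C = true) -> mk (T, C).
Proof.
  intros Hr Hp Ho. econstructor; eauto. intro Hm. destruct (Ho Hm). unfold mseq_ofree; simpl.
  apply andb_true_iff; auto.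
Qed.
Lemma mk_mk0 T C : mrule k minus [] (T, C) -> (minus = true -> mof T = true /\ ofree C = true) -> mk (T, C).
Proof. intros; eapply mk_mk; eauto. intros p []. Qed.
Lemma mk_mk1 p T C : mrule k minus [p] (T, C) -> mk p -> (minus = true -> mof T = true /\ ofree C = true) -> mk (T, C).
Proof. intros; eapply mk_mk; eauto. intros q [<-|[]]; auto. Qed.
Lemma mk_mk2 p1 p2 T C : mrule k minus [p1; p2] (T, C) -> mk p1 -> mk p2 ->
  (minus = true -> mof T = true /\ ofree C = true) -> mk (T, C).
Proof. intros; eapply mk_mk; eauto. intros q [<-|[<-|[]]]; auto. Qed.
Lemma mk_conv T T' C : mk (T, C) -> T = T' -> mk (T', C).
Proof. intros H ->; auto. Qed.

Lemma mperm c z z' G C : Permutation z z' -> mk (plug c (z, G), C) -> mk (plug c (z', G), C).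
Proof.
  intros Hp H. eapply mk_mk1; [apply m_perm; exact Hp | exact H |].
  intro Hm. destruct (mk_ofree _ _ H Hm) as [H1 H2]. split; auto.
  rewrite mof_plug, mof_pair in *. rewrite <- (forallb_perm _ _ _ Hp). auto.
Qed.

Ltac splinv := repeat match goal with
 | H : spl (fplug _ _) _ _ |- _ =>
     let c' := fresh "c'" in let zx := fresh "zx" in let X := fresh "X'" in let Heq := fresh "Heq" in
     let H' := fresh "Hs" in let Hc := fresh "Hc" in let Hm := fresh "Hm" in
     apply spl_plug_inv in H as [c' [zx [X [Heq [H' [Hc Hm]]]]]]; rewrite <- Heq in *; clear Heq
 | H : spl (FF _ :: _) _ _ |- _ =>
     let z := fresh "z" in let G := fresh "G'" in let H' := fresh "Hs" in let A0 := fresh "A0" in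
     let Heq := fresh "Heq" in
     apply spl_FF_inv in H as [z [G [H' [[-> ->]|[A0 [Heq [-> ->]]]]]]];
     [| try discriminate Heq; try (injection Heq as Heq); subst]
 | H : spl (FB _ :: _) _ _ |- _ =>
     let z := fresh "z" in let G := fresh "G'" in let G2 := fresh "G'" in let H' := fresh "Hs" in let H2 := fresh "Hs" in
     apply spl_FB_inv in H as [z [G [G2 [H' [H2 ->]]]]]
 | H : spl [] _ _ |- _ => apply spl_nil_inv in H as [-> ->]
 | H : spl (?l ++ _) _ _ |- _ => is_var l;
     let z1 := fresh "z" in let z2 := fresh "z" in let G1 := fresh "G'" in let G2 := fresh "G'" in
     let H1 := fresh "Hs" in let H2 := fresh "Hs" in
     apply spl_app_inv in H as [z1 [z2 [G1 [G2 [-> [-> [H1 H2]]]]]]]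
 end.

Lemma ih_plug L C T : (forall z G, spl L z G -> mk ((z, G), C)) -> splm L T -> mk (T, C).
Proof. destruct T; intros H1 H2; apply H1; exact H2. Qed.

Ltac splprove := first [ assumption | apply sp_nil
  | apply sp_keep; splprove | apply sp_st; splprove | apply sp_br; splprove
  | apply spl_app; splprove | apply spl_app_nil; splprove ].
Ltac prem := match goal with P : forall z G, spl _ z G -> mder _ _ _ |- _ =>
  eapply ih_plug; [exact P | first [ match goal with Hm : forall Y zy Y', spl Y zy Y' -> splm (fplug _ Y) (plug _ (zy, Y')) |- _ =>
                                        apply Hm; solve [splprove] end
                                    | unfold splm; simpl; solve [splprove] ] ] end.
Ltac ofm := match goal with Hof' : minus = true -> _ /\ _ |- _ =>
  let Hm := fresh in intro Hm; destruct (Hof' Hm); split; auto; mbauto end.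
Ltac sidem := match goal with n : minus = true -> _ <> [], H : spl _ _ _ |- _ =>
  let Hm := fresh in intro Hm; eapply spl_ne; [exact H | auto] end.

Lemma f_to_m s : fder k minus s -> forall z G, spl (fst s) z G -> mk ((z, G), snd s).
Proof.
  induction 1 as [ps s Hr Hps IH Hof]. intros z G Hs.
  assert (Hof' : minus = true -> mof (z, G) = true /\ ofree (snd s) = true).
  { intro Hm. specialize (Hof Hm). destruct s as [L C]. unfold fseq_ofree in Hof. simpl in *.
    apply andb_true_iff in Hof as [H1 H2]. fold (lofree L) in H1.
    rewrite (spl_ofree _ _ _ Hs) in H1. auto. }
  clear Hof. destruct Hr; splitIH IH; clear IH Hps; simpl in *; splinv.
  - eapply mk_mk0; [apply m_ax | ofm].
  - eapply mk_mk1; [apply m_bangR | | ofm].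
    eapply mk_mk1; [apply (m_bangP k minus Hole [] A0 [] []) | | ofm].
    eapply mk_mk0; [apply m_ax | ofm].
  - eapply mk_mk0; [apply m_one; auto | ofm].
  - apply (mperm c' (z1 ++ z0 ++ z3)); [apply Permutation_app_swap_app|].
    eapply mk_mk2; [apply m_overL | prem | prem | ofm].
  - eapply mk_mk1; [apply m_overR; sidem | prem | ofm].
  - apply (mperm c' (z2 ++ z0 ++ z1)); [apply Permutation_app_swap_app|].
    eapply mk_mk2; [apply m_underL | prem | prem | ofm].
  - eapply mk_mk1; [apply m_underR; sidem | prem | ofm].
  - eapply mk_mk1; [apply m_prodL | prem | ofm].
  - eapply mk_mk2; [apply m_prodR | prem | prem | ofm].
  - eapply mk_mk1; [apply m_oneL; auto | prem | ofm].
  - eapply mk_mk2; [apply m_joinL | prem | prem | ofm].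
  - eapply mk_mk1; [apply m_joinR1 | prem | ofm].
  - eapply mk_mk1; [apply m_joinR2 | prem | ofm].
  - eapply mk_mk1; [apply m_meetL1 | prem | ofm].
  - eapply mk_mk1; [apply m_meetL2 | prem | ofm].
  - eapply mk_mk2; [apply m_meetR | prem | prem | ofm].
  - eapply mk_mk1; [apply m_boxinvL | prem | ofm].
  - eapply mk_mk1; [apply m_boxinvR | prem | ofm].
  - eapply mk_mk1; [apply m_diaL | prem | ofm].
  - eapply mk_mk1; [apply m_diaR | prem | ofm].
  - eapply mk_mk1; [apply m_bangL | | ofm].
    eapply mk_mk1; [apply m_bangP | prem | ofm].
  - apply (mperm c' ((z0 ++ z2) ++ [A0])); [rewrite <- app_assoc; apply Permutation_app_head; apply Permutation_sym, Permutation_cons_append|].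
    eapply mk_mk1; [apply m_bangP | prem | ofm].
  - eapply mk_conv; [eapply mk_mk1; [apply (m_bangL k minus c' (z0 ++ z2 ++ z1) A (G' ++ G'1) G'0) | | ofm] | rewrite <- app_assoc; reflexivity].
    apply (mperm c' (z0 ++ A :: z2 ++ z1)); [rewrite <- !app_assoc; apply Permutation_app_head; rewrite (app_assoc z2 z1 [A]); apply Permutation_cons_append|].
    rewrite <- app_assoc. prem.
  - apply (mperm c' (z0 ++ A0 :: z2 ++ z1)); [apply Permutation_app_head, Permutation_middle|].
    prem.
  - eapply mk_mk1; [apply (m_bangL k minus c' (z0 ++ z1 ++ z3) A G' (G'0 ++ G'2)) | | ofm].
    apply (mperm c' (z0 ++ z1 ++ A :: z3)); [|prem].
    rewrite <- !app_assoc. apply Permutation_app_head, Permutation_app_head, Permutation_cons_append.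
  - apply (mperm c' (z0 ++ z1 ++ A0 :: z3)); [|prem].
    apply Permutation_app_head, Permutation_sym, Permutation_middle.
  - eapply mk_mk1; [apply (m_bangL k minus Hole [] A [] []) | | ofm].
    eapply mk_mk1; [apply m_bangR | prem | ofm].
  - eapply mk_mk1; [apply m_bangR | prem | ofm].
  - eapply mk_mk1; [apply (m_bangL k minus c' (z1 ++ z2) A [] (G'0 ++ TB [] [TB z3 G'1] :: G'2)) | | ofm].
    simpl.
    eapply mk_mk1; [apply (m_bangC k minus c' (z1 ++ z2) A G'0 z3 G'1 G'2); sidem | | ofm].
    replace (plug c' ((z1 ++ z2) ++ [A], G'0 ++ TB (z3 ++ [A]) G'1 :: G'2))
      with (plug (mccomp c' (In_ ((z1 ++ z2) ++ [A]) G'0 Hole G'2)) (z3 ++ [A], G'1)) by (rewrite plug_mccomp; reflexivity).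
    apply (mperm _ (A :: z3)); [apply Permutation_cons_append|].
    rewrite plug_mccomp; simpl.
    apply (mperm c' (A :: z1 ++ z2)); [apply Permutation_cons_append|].
    prem.
  - apply (mperm c' ((z1 ++ z2) ++ [A0])); [apply Permutation_sym, Permutation_cons_append|].
    eapply mk_mk1; [apply (m_bangC k minus c' (z1 ++ z2) A0 G'0 z3 G'1 G'2); sidem | | ofm].
    replace (plug c' ((z1 ++ z2) ++ [A0], G'0 ++ TB (z3 ++ [A0]) G'1 :: G'2))
      with (plug (mccomp c' (In_ ((z1 ++ z2) ++ [A0]) G'0 Hole G'2)) (z3 ++ [A0], G'1)) by (rewrite plug_mccomp; reflexivity).
    apply (mperm _ (A0 :: z3)); [apply Permutation_cons_append|].
    rewrite plug_mccomp; simpl.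
    apply (mperm c' (A0 :: z1 ++ z2)); [apply Permutation_cons_append|].
    prem.
  - apply (mperm c' (z2 ++ z0 ++ z3)); [apply Permutation_app_swap_app|].
    eapply mk_mk2; [apply m_cut; auto | prem | prem | ofm].
Qed.
End M.


Lemma nocut_m minus s : mder false minus s -> mder true minus s.
Proof.
  induction 1 as [ps s Hr Hps IH Hof]. econstructor; eauto.
  destruct Hr; try (constructor; assumption). discriminate.
Qed.

Fixpoint emb_spl_cons (t : ftm) : forall L G, spl L [] G -> spl (t :: L) [] (emb t :: G).
Proof.
  destruct t as [A|G0]; intros L G H; simpl.
  - constructor; auto.
  - constructor; auto. induction G0 as [|t' G0 IHG]; simpl; [constructor|]. apply emb_spl_cons; auto.
Defined.

Lemma emb_spl X : spl X [] (map emb X).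
Proof. induction X; simpl; [constructor|]. apply emb_spl_cons; auto. Qed.

Fixpoint trt_emb (t : ftm) : trt (emb t) = t.
Proof.
  destruct t as [A|G0]; simpl; auto. f_equal.
  induction G0 as [|t' G0 IHG]; simpl; auto. rewrite trt_emb. simpl in IHG. rewrite IHG. reflexivity.
Defined.

Lemma trm_emb X : trm ([], map emb X) = X.
Proof. unfold trm; simpl. induction X; simpl; auto. rewrite trt_emb, IHX. reflexivity. Qed.

Theorem proposition1 :
  forall (minus : bool) (X : fmeta) (C : formula),
    (fder false minus (X, C) <-> fder true minus (X, C)) /\
    (fder true minus (X, C) <-> mder true minus (emb_seq (X, C))) /\
    (mder true minus (emb_seq (X, C)) <-> mder false minus (emb_seq (X, C))).
Proof.
  intros minus X C. split; [|split].
  - split; [apply nocut_cut | apply cut_elim].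
  - split.
    + intro H. apply (f_to_m true minus (X, C) H). apply emb_spl.
    + intro H. apply m_to_f in H. simpl in H. rewrite trm_emb in H. exact H.
  - split.
    + intro H. apply m_to_f in H. simpl in H. rewrite trm_emb in H. apply cut_elim in H.
      apply (f_to_m false minus (X, C) H). apply emb_spl.
    + apply nocut_m.
Qed.
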